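(* Let $T_M$ be an Endo–Pajitnov manifold as in the context and assume $M$ is diagonalizable; choose the basis $\{b_j\}$ of $W$ to consist of eigenvectors, so that $R$ is diagonal with entries $\beta_1,\dots,\beta_n$. Then there exist smooth complex $1$-forms $\eta,\theta_1,\dots,\theta_n$ of type $(1,0)$ on $\mathbb H\times\mathbb C^n$, invariant under every element of $G_M$ (hence descending to $T_M$), forming at every point a basis of the $(1,0)$-cotangent space, and satisfying $$d\eta=\log\alpha\ \eta\wedge\overline\eta,\qquad d\theta_k=-\log\beta_k\,(\eta+\overline\eta)\wedge\theta_k,\quad 1\le k\le n,$$ where $\log$ denotes the principal branch.
   Context: Endo–Pajitnov setup. Let $n\ge 2$ be an integer and let $M\in \mathrm{SL}(2n+1,\mathbb Z)$ be a matrix whose eigenvalues, listed with multiplicity, are $\alpha,\beta_1,\dots,\beta_n,\overline{\beta_1},\dots,\overline{\beta_n}$, where $\alpha$ is real, $\alpha>0$, $\alpha\neq 1$, and $\operatorname{Im}\beta_j>0$ for all $j$. Let $a=(a^1,\dots,a^{2n+1})^T\in\mathbb R^{2n+1}$ be a nonzero eigenvector of $M$ for $\alpha$. Let $W\subset\mathbb C^{2n+1}$ be the direct sum of the generalized eigenspaces $\{x:\exists N,\ (M-\beta_jI)^Nx=0\}$ over the $\beta_j$ (so $\dim_{\mathbb C}W=n$), and let $b_1,\dots,b_n$ be a $\mathbb C$-basis of $W$, $b_j=(b_j^1,\dots,b_j^{2n+1})^T$. For $1\le i\le 2n+1$ set $u_i=(a^i,b_1^i,\dots,b_n^i)\in\mathbb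 R\times\mathbb C^n$. Let $R=(r_{ij})\in M_n(\mathbb C)$ be the matrix of $M|_W:W\to W$ in the basis $\{b_j\}$, i.e. $Mb_j=\sum_i r_{ij}b_i$. Let $\mathbb H=\{w\in\mathbb C:\operatorname{Im}w>0\}$ and define automorphisms of $\mathbb H\times\mathbb C^n$ by $g_0(w,z)=(\alpha w,R^Tz)$ and $g_i(w,z)=(w,z)+u_i$, $1\le i\le 2n+1$. Let $G_M$ be the group generated by $g_0,\dots,g_{2n+1}$; it acts freely and properly discontinuously, and $T_M:=G_M\backslash(\mathbb H\times\mathbb C^n)$ is a compact complex manifold of complex dimension $n+1$ (the Endo–Pajitnov manifold of $M$). Its biholomorphism class does not depend on the choice of $a$ and of the basis $\{b_j\}$. *)

(* Defs.v *)
From mathcomp Require Import all_boot all_algebra.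
From mathcomp Require Import complex.
From mathcomp Require Import all_classical all_reals all_analysis.
Set Implicit Arguments. Unset Strict Implicit. Unset Printing Implicit Defensive.
Import GRing.Theory Num.Theory.
Local Open Scope ring_scope.
Local Open Scope complex_scope.

Section EPDefs.
Variable R : realType.
Local Notation C := R[i].

(* Points of C^{n+1} = C x C^n are row vectors p; coordinate 0 is w,
   coordinate (lift ord0 k) is z_k. *)
Definition EPpt (n : nat) := 'rV[C]_(n.+1).

Definition EPdom (n : nat) (p : EPpt n) : Prop := 0 < complex.Im (p ord0 ord0).

(* Principal branch of the complex logarithm: ln|z| + i Arg z, Arg z in (-pi, pi]. *)
Definition cabs (z : C) : R := Num.sqrt (complex.Re z ^+ 2 + complex.Im z ^+ 2).
Definition Arg (z : C) : R :=
  if 0 <= complex.Im z then acos (complex.Re z / cabs z) else - acos (complex.Re z / cabs z).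
Definition Log (z : C) : C := (ln (cabs z)) +i* (Arg z).

Definition has_dirderiv n (F : EPpt n -> C) (p v : EPpt n) (l : C) : Prop :=
  is_derive (0 : R) (1 : R) (fun t : R => complex.Re (F (p + t%:C *: v))) (complex.Re l) /\
  is_derive (0 : R) (1 : R) (fun t : R => complex.Im (F (p + t%:C *: v))) (complex.Im l).

Definition dirderiv n (F : EPpt n -> C) (p v : EPpt n) : C :=
  (derive1 (fun t : R => complex.Re (F (p + t%:C *: v))) 0) +i*
  (derive1 (fun t : R => complex.Im (F (p + t%:C *: v))) 0).

Definition ccont_on n (U : EPpt n -> Prop) (F : EPpt n -> C) : Prop :=
  forall p, U p -> forall e : R, 0 < e -> exists d : R, 0 < d /\
    forall q : EPpt n, (forall j, `|q ord0 j - p ord0 j| < d%:C) ->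
      `|F q - F p| < e%:C.

Fixpoint Ck_on n (U : EPpt n -> Prop) (k : nat) (F : EPpt n -> C) : Prop :=
  match k with
  | 0 => ccont_on U F
  | k'.+1 => ccont_on U F /\
      forall v : EPpt n, exists G : EPpt n -> C,
        (forall p, U p -> has_dirderiv F p v (G p)) /\ Ck_on U k' G
  end.

Definition smooth_on n (U : EPpt n -> Prop) (F : EPpt n -> C) : Prop :=
  forall k, Ck_on U k F.

(* Complex 1-forms on (an open subset of) C^{n+1}: omega p v, with p a point
   and v a (real) tangent vector. *)
Definition form1 n := EPpt n -> EPpt n -> C.
Definition form2 n := EPpt n -> EPpt n -> EPpt n -> C.

Definition smooth_10_form n (U : EPpt n -> Prop) (om : form1 n) : Prop :=
  (forall p, U p -> forall (c : C) (v w : EPpt n),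
       om p (c *: v + w) = c * om p v + om p w) /\
  (forall v, smooth_on U (fun p => om p v)).

Definition conjform n (om : form1 n) : form1 n := fun p v => (om p v)^*.
Definition addform n (om1 om2 : form1 n) : form1 n := fun p v => om1 p v + om2 p v.
Definition wedge1 n (a b : form1 n) : form2 n :=
  fun p X Y => a p X * b p Y - a p Y * b p X.
(* Exterior derivative (via constant vector fields X, Y). *)
Definition dform n (om : form1 n) : form2 n :=
  fun p X Y => dirderiv (fun q => om q Y) p X - dirderiv (fun q => om q X) p Y.

Definition Dmap n (g : EPpt n -> EPpt n) (p v : EPpt n) : EPpt n :=
  \row_j dirderiv (fun q => g q ord0 j) p v.
Definition invariant_form n (U : EPpt n -> Prop) (g : EPpt n -> EPpt n)
  (om : form1 n) : Prop :=
  forall p, U p -> forall v, om (g p) (Dmap g p v) = om p v.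

(* The family (eta, theta_1, ..., theta_n) is a C-basis of the space of
   C-linear functionals on the tangent space at p (the (1,0)-cotangent space). *)
Definition famf n (eta : form1 n) (theta : 'I_n -> form1 n) (i : 'I_n.+1) : form1 n :=
  match unlift ord0 i with None => eta | Some k => theta k end.
Definition basis10_at n (om : 'I_n.+1 -> form1 n) (p : EPpt n) : Prop :=
  (forall c : 'I_n.+1 -> C,
     (forall v, \sum_i c i * om i p v = 0) -> forall i, c i = 0) /\
  (forall f : EPpt n -> C,
     (forall (c : C) (v w : EPpt n), f (c *: v + w) = c * f v + f w) ->
     exists c : 'I_n.+1 -> C, forall v, f v = \sum_i c i * om i p v).

Inductive gen_group (T I : Type) (gens : I -> T -> T) : (T -> T) -> Prop :=
  | gg_gen i : gen_group gens (gens i)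
  | gg_comp g h : gen_group gens g -> gen_group gens h -> gen_group gens (g \o h)
  | gg_inv g h : gen_group gens g -> cancel g h -> cancel h g -> gen_group gens h.

Definition intC (z : int) : C := z%:~R.

Definition inW m n (Mc : 'M[C]_m) (beta : 'I_n -> C) (x : 'cV[C]_m) : Prop :=
  exists xs : 'I_n -> 'cV[C]_m, x = \sum_j xs j /\
    forall j, exists N : nat, (Mc - (beta j)%:M) ^+ N *m xs j = 0.

Definition basis_of_W m n (Mc : 'M[C]_m) (beta : 'I_n -> C) (b : 'I_n -> 'cV[C]_m) : Prop :=
  (forall j, inW Mc beta (b j)) /\
  (forall c : 'I_n -> C, \sum_j c j *: b j = 0 -> forall j, c j = 0) /\
  (forall x, inW Mc beta x -> exists c : 'I_n -> C, x = \sum_j c j *: b j).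

Definition uvec m n (a : 'cV[R]_m) (b : 'I_n -> 'cV[C]_m) (i : 'I_m) : EPpt n :=
  \row_j match unlift ord0 j with
         | None => (a i ord0)%:C
         | Some k => b k i ord0
         end.

Definition EPg0 n (alpha : R) (Rm : 'M[C]_n) (p : EPpt n) : EPpt n :=
  \row_j match unlift ord0 j with
         | None => alpha%:C * p ord0 ord0
         | Some k => \sum_l Rm l k * p ord0 (lift ord0 l)
         end.

Definition EPgens m n (alpha : R) (Rm : 'M[C]_n) (a : 'cV[R]_m)
  (b : 'I_n -> 'cV[C]_m) (i : 'I_m.+1) : EPpt n -> EPpt n :=
  match unlift ord0 i with
  | None => EPg0 alpha Rm
  | Some i' => fun p => p + uvec a b i'
  end.

End EPDefs.

(* Main.v *)
Require Import Defs.
From mathcomp Require Import all_boot all_algebra.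
From mathcomp Require Import complex.
From mathcomp Require Import all_classical all_reals all_analysis.
From mathcomp Require Import ring lra all_order.
Import Order.TTheory GRing.Theory Num.Theory.
Local Open Scope ring_scope.
Local Open Scope complex_scope.
Set Implicit Arguments. Unset Strict Implicit. Unset Printing Implicit Defensive.
Section S.
Variable R : realType.
Local Notation C := R[i].
Lemma cReM (x y : C) : complex.Re (x * y) = complex.Re x * complex.Re y - complex.Im x * complex.Im y.
Proof. by case: x => a b; case: y => c d. Qed.
Lemma cImM (x y : C) : complex.Im (x * y) = complex.Re x * complex.Im y + complex.Im x * complex.Re y.
Proof. by case: x => a b; case: y => c d. Qed.
Lemma cReD (x y : C) : complex.Re (x + y) = complex.Re x + complex.Re y.
Proof. by case: x => a b; case: y => c d. Qed.
Lemma cImD (x y : C) : complex.Im (x + y) = complex.Im x + complex.Im y.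
Proof. by case: x => a b; case: y => c d. Qed.
Lemma cReN (x : C) : complex.Re (- x) = - complex.Re x. Proof. by case: x. Qed.
Lemma cImN (x : C) : complex.Im (- x) = - complex.Im x. Proof. by case: x. Qed.
Lemma cReR (k : R) : complex.Re k%:C = k. Proof. by []. Qed.
Lemma cImR (k : R) : complex.Im k%:C = 0. Proof. by []. Qed.
Lemma cReC (a b : R) : complex.Re (a +i* b) = a. Proof. by []. Qed.
Lemma cImC (a b : R) : complex.Im (a +i* b) = b. Proof. by []. Qed.
Lemma cRe1 : complex.Re (1 : C) = 1. Proof. by []. Qed.
Lemma cIm1 : complex.Im (1 : C) = 0. Proof. by []. Qed.
Lemma cReJ (x : C) : complex.Re x^* = complex.Re x. Proof. by case: x. Qed.
Lemma cImJ (x : C) : complex.Im x^* = - complex.Im x. Proof. by case: x. Qed.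
Lemma ceqP (x y : C) : complex.Re x = complex.Re y -> complex.Im x = complex.Im y -> x = y.
Proof. by case: x => a b; case: y => c d /= -> ->. Qed.

Definition cexp (z : C) : C :=
  (expR (complex.Re z) * cos (complex.Im z)) +i* (expR (complex.Re z) * sin (complex.Im z)).
Definition cpow (y : R) (s : C) : C := cexp (s * (ln y)%:C).

Lemma cexpD z w : cexp (z + w) = cexp z * cexp w.
Proof.
case: z => a b; case: w => c d; apply: ceqP; rewrite /cexp ?cReM ?cImM /=; rewrite ?expRD ?cosD ?sinD; ring.
Qed.
Lemma cexp0 : cexp 0 = 1.
Proof. apply: ceqP => /=; by rewrite expR0 mul1r ?cos0 ?sin0. Qed.
Lemma cexp_neq0 z : cexp z != 0.
Proof.
apply/negP => /eqP H; have := cexpD z (- z); rewrite subrr cexp0 H mul0r.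
by move/eqP; rewrite oner_eq0.
Qed.
Lemma cexpN z : cexp (- z) = (cexp z)^-1.
Proof.
apply: (mulIf (cexp_neq0 z)); rewrite -cexpD addNr cexp0 mulVf //; exact: cexp_neq0.
Qed.
End S.
Section S2.
Variable R : realType.
Local Notation C := R[i].
Lemma cexpR (r : R) : cexp r%:C = (expR r)%:C.
Proof. by apply: ceqP; rewrite /= ?cos0 ?sin0 ?mulr1 ?mulr0. Qed.
Lemma cpowM (x y : R) s : 0 < x -> 0 < y -> cpow (x * y) s = cpow x s * cpow y s.
Proof. by move=> x0 y0; rewrite /cpow lnM ?posrE // rmorphD mulrDr cexpD. Qed.
Lemma cpow1 s : cpow 1 s = 1 :> C.
Proof. by rewrite /cpow ln1 mulr0 cexp0. Qed.
Lemma cpow_neq0 y s : cpow y s != 0 :> C. Proof. exact: cexp_neq0. Qed.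
Lemma cpowB1 (y : R) s : 0 < y -> cpow y (s - 1) = cpow y s * (y^-1)%:C.
Proof.
move=> y0; rewrite /cpow mulrBl mul1r cexpD -rmorphN cexpR expRN lnK //.
Qed.
Lemma cpowN1 (y : R) : 0 < y -> cpow y (-1) = (y^-1)%:C.
Proof. by move=> y0; rewrite -sub0r cpowB1 // /cpow mul0r cexp0 mul1r. Qed.

Definition cder (f : R -> C) (x : R) (l : C) :=
  is_derive x (1:R) (fun t => complex.Re (f t)) (complex.Re l) /\
  is_derive x (1:R) (fun t => complex.Im (f t)) (complex.Im l).

Lemma is_derive1_comp (f g : R -> R) x df dg :
  is_derive x (1:R) f df -> is_derive (f x) (1:R) g dg -> is_derive x (1:R) (g \o f) (dg * df).
Proof.
move=> Hf Hg; apply: DeriveDef.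
  apply/derivable1_diffP; apply: differentiable_comp; apply/derivable1_diffP.
  exact: (@ex_derive _ _ _ _ _ _ _ Hf). exact: (@ex_derive _ _ _ _ _ _ _ Hg).
rewrite -derive1E derive1_comp; last 2 first.
  exact: (@ex_derive _ _ _ _ _ _ _ Hf). exact: (@ex_derive _ _ _ _ _ _ _ Hg).
by rewrite !derive1E (@derive_val _ _ _ _ _ _ _ Hf) (@derive_val _ _ _ _ _ _ _ Hg).
Qed.

Lemma is_derive_lin2 (f g : R -> R) (a b : R) x df dg :
  is_derive x (1:R) f df -> is_derive x (1:R) g dg ->
  is_derive x (1:R) (fun t => a * f t + b * g t) (a * df + b * dg).
Proof.
move=> Hf Hg.
have H := is_deriveD (is_deriveZ a Hf) (is_deriveZ b Hg).
exact: H.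
Qed.

Lemma is_derive_mul2 (f g : R -> R) x df dg :
  is_derive x (1:R) f df -> is_derive x (1:R) g dg ->
  is_derive x (1:R) (fun t => f t * g t) (f x * dg + g x * df).
Proof. move=> Hf Hg; have H := is_deriveM Hf Hg; exact: H. Qed.

Lemma cder_mulC (f : R -> C) x l K : cder f x l -> cder (fun t => K * f t) x (K * l).
Proof.
case=> H1 H2; split.
  have -> : (fun t => complex.Re (K * f t)) = (fun t => complex.Re K * complex.Re (f t) + (- complex.Im K) * complex.Im (f t)).
    by apply: funext => t; rewrite cReM mulNr.
  rewrite cReM -mulNr; exact: is_derive_lin2.
have -> : (fun t => complex.Im (K * f t)) = (fun t => complex.Re K * complex.Im (f t) + complex.Im K * complex.Re (f t)).
  by apply: funext => t; rewrite cImM.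
rewrite cImM; exact: is_derive_lin2.
Qed.

Lemma cder_cexp (g : R -> C) x l : cder g x l -> cder (fun t => cexp (g t)) x (cexp (g x) * l).
Proof.
case=> H1 H2.
have HE := is_derive1_comp H1 (is_derive_expR _).
have HC := is_derive1_comp H2 (is_derive_cos _).
have HS := is_derive1_comp H2 (is_derive_sin _).
split.
  have H := is_derive_mul2 HE HC.
  eapply is_derive_eq; first eexact H.
  rewrite cReM /=; ring.
have H := is_derive_mul2 HE HS.
eapply is_derive_eq; first eexact H.
rewrite cImM /=; ring.
Qed.

Lemma cder_realC (f : R -> R) x df s :
  is_derive x (1:R) f df -> cder (fun t => s * (f t)%:C) x (s * df%:C).
Proof.
move=> Hf; split.
  have -> : (fun t => complex.Re (s * (f t)%:C)) = (fun t => complex.Re s * f t + 0 * f t).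
    by apply: funext => t; rewrite cReM /= mulr0 subr0 mul0r addr0.
  eapply is_derive_eq; first eexact (is_derive_lin2 (complex.Re s) 0 Hf Hf).
  by rewrite cReM /=; ring.
have -> : (fun t => complex.Im (s * (f t)%:C)) = (fun t => complex.Im s * f t + 0 * f t).
  by apply: funext => t; rewrite cImM /= mulr0 add0r mul0r addr0 mulrC.
eapply is_derive_eq; first eexact (is_derive_lin2 (complex.Im s) 0 Hf Hf).
by rewrite cImM /=; ring.
Qed.

Lemma is_derive_ln_aff (y0 u x : R) : 0 < y0 + x * u ->
  is_derive x (1:R) (fun t => ln (y0 + t * u)) ((y0 + x * u)^-1 * u).
Proof.
move=> Hp.
have Hl : is_derive x (1:R) (fun t => y0 + t * u) u.
  have -> : (fun t => y0 + t * u) = (fun t => y0 * 1 + u * t) by apply: funext => t; ring.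
  eapply is_derive_eq; first eexact (is_derive_lin2 y0 u (is_derive_cst (1:R) x 1) (is_derive_id x 1)).
  ring.
exact: (is_derive1_comp Hl (is_derive1_ln Hp)).
Qed.

Lemma cder_cpow (K s : C) (y0 u x : R) : 0 < y0 + x * u ->
  cder (fun t => K * cpow (y0 + t * u) s) x
       (K * (cpow (y0 + x * u) s * (s * ((y0 + x * u)^-1 * u)%:C))).
Proof.
move=> Hp; apply: cder_mulC; rewrite /cpow.
apply: (cder_cexp (g := fun t => s * (ln (y0 + t * u))%:C)).
exact: cder_realC (is_derive_ln_aff Hp).
Qed.
End S2.
Section S3.
Variable R : realType.
Local Notation C := R[i].
Variable n : nat.
Local Notation P := (EPpt R n).

Definition Fc (K s : C) : P -> C := fun p => K * cpow (complex.Im (p ord0 ord0)) s.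

Lemma cder_eq (f : R -> C) x l l' : cder f x l -> l = l' -> cder f x l'.
Proof. by move=> H <-. Qed.

Lemma pt_entry (p v : P) (t : R) j : (p + t%:C *: v) ord0 j = p ord0 j + t%:C * v ord0 j.
Proof. by rewrite !mxE. Qed.

Lemma has_Fc K s (p v : P) : 0 < complex.Im (p ord0 ord0) ->
  has_dirderiv (Fc K s) p v
    (K * s * (complex.Im (v ord0 ord0))%:C * cpow (complex.Im (p ord0 ord0)) (s - 1)).
Proof.
move=> Hp.
apply: (fun H : cder (fun t : R => Fc K s (p + t%:C *: v)) 0 _ => H).
set y0 := complex.Im (p ord0 ord0); set u := complex.Im (v ord0 ord0).
have -> : (fun t : R => Fc K s (p + t%:C *: v)) = (fun t => K * cpow (y0 + t * u) s).
  apply: funext => t; rewrite /Fc pt_entry cImD cImM /= mul0r addr0 //.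
have Hp' : 0 < y0 + 0 * u by rewrite mul0r addr0.
apply: (cder_eq (cder_cpow K s Hp')).
rewrite mul0r addr0 cpowB1 //.
rewrite [_ * u]mulrC rmorphM /=; field.
by rewrite eq_complex /= negb_and (lt0r_neq0 Hp).
Qed.

Lemma dirderiv_has (F : P -> C) p v l : has_dirderiv F p v l -> dirderiv F p v = l.
Proof.
case=> H1 H2; rewrite /dirderiv !derive1E.
rewrite (@derive_val _ _ _ _ _ _ _ H1) (@derive_val _ _ _ _ _ _ _ H2).
by case: l {H1 H2}.
Qed.

Lemma is_derive_affR (a b : R) x : is_derive x (1:R) (fun t : R => a + t * b) b.
Proof.
have -> : (fun t : R => a + t * b) = (fun t => a * 1 + b * t) by apply: funext => t; ring.
eapply is_derive_eq; first eexact (is_derive_lin2 a b (is_derive_cst (1:R) x 1) (is_derive_id x 1)).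
ring.
Qed.

Lemma dirderiv_aff (F : P -> C) p v c0 c1 :
  (forall t : R, F (p + t%:C *: v) = c0 + t%:C * c1) -> dirderiv F p v = c1.
Proof.
move=> HF; apply: (dirderiv_has (p:=p) (v:=v)).
apply: (fun H : cder (fun t : R => F (p + t%:C *: v)) 0 c1 => H).
have -> : (fun t : R => F (p + t%:C *: v)) = (fun t : R => c0 + t%:C * c1) by apply: funext.
rewrite /cder; split.
  have -> : (fun t : R => complex.Re (c0 + t%:C * c1)) = (fun t => complex.Re c0 + t * complex.Re c1).
    by apply: funext => t; rewrite cReD cReM /= mul0r subr0.
  exact: is_derive_affR.
have -> : (fun t : R => complex.Im (c0 + t%:C * c1)) = (fun t => complex.Im c0 + t * complex.Im c1).
  by apply: funext => t; rewrite cImD cImM /= mul0r addr0.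
exact: is_derive_affR.
Qed.
End S3.
Section S4.
Variable R : realType.
Local Notation C := R[i].

Lemma cont_eps (f : R -> R) y0 df : is_derive y0 (1:R) f df ->
  forall e : R, 0 < e -> exists2 d : R, 0 < d & forall y, `|y0 - y| < d -> `|f y0 - f y| < e.
Proof.
move=> Hf e e0.
have Hd : derivable f y0 1 := @ex_derive _ _ _ _ _ _ _ Hf.
have Hc := differentiable_continuous (proj1 (derivable1_diffP _ _) Hd).
have H := (proj1 (cvgrPdist_lt _ _) Hc) e e0. case: (proj1 (nbhs_normP _ _) (H _)) => d d0 Hsub; exists d => //.
Qed.

Lemma sqrt_le_sum (a b : R) : Num.sqrt (a ^+ 2 + b ^+ 2) <= `|a| + `|b|.
Proof.
rewrite -[X in _ <= X]ger0_norm ?addr_ge0 // -sqrtr_sqr; apply: ler_wsqrtr.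
rewrite sqrrD !real_normK ?num_real // -addrA lerD2l lerDr.
by rewrite mulrn_wge0 // mulr_ge0.
Qed.

Lemma Im_le_sqrt (a b : R) : `|b| <= Num.sqrt (a ^+ 2 + b ^+ 2).
Proof. by rewrite -sqrtr_sqr; apply: ler_wsqrtr; rewrite lerDr sqr_ge0. Qed.
Lemma Re_le_sqrt (a b : R) : `|a| <= Num.sqrt (a ^+ 2 + b ^+ 2).
Proof. by rewrite addrC; exact: Im_le_sqrt. Qed.

Lemma cnorm_lt (z : C) (e : R) : `|complex.Re z| < e / 2 -> `|complex.Im z| < e / 2 -> `|z| < e%:C.
Proof.
move=> h1 h2; rewrite normc_def ltcR.
apply: (le_lt_trans (sqrt_le_sum _ _)).
by rewrite [e]splitr ltrD.
Qed.

Lemma cnorm_Im (z : C) (d : R) : `|z| < d%:C -> `|complex.Im z| < d.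
Proof. by rewrite normc_def ltcR; apply: le_lt_trans; exact: Im_le_sqrt. Qed.
End S4.
Section S5.
Variable R : realType.
Local Notation C := R[i].
Variable n : nat.
Local Notation P := (EPpt R n).

Lemma ccont_Fc K s : ccont_on (@EPdom R n) (Fc K s).
Proof.
move=> p Hp e e0.
set y0 := complex.Im (p ord0 ord0).
have Hy0 : 0 < 0 + y0 * 1 by rewrite add0r mulr1.
have [HR HI] := cder_cpow K s Hy0.
have e2 : 0 < e / 2 by rewrite divr_gt0.
have [d1 d10 H1] := cont_eps HR e2.
have [d2 d20 H2] := cont_eps HI e2.
exists (Num.min d1 d2); split; first by rewrite lt_min d10 d20.
move=> q Hq.
have Hy := cnorm_Im (Hq ord0).
rewrite cImD cImN lt_min in Hy; case/andP: Hy => Hy1 Hy2.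
rewrite distrC in Hy1 Hy2.
have h1 := H1 _ Hy1; have h2 := H2 _ Hy2.
rewrite !add0r !mulr1 in h1 h2.
apply: cnorm_lt.
  by rewrite cReD cReN distrC.
by rewrite cImD cImN distrC.
Qed.

Lemma Ck_Fc k : forall K s, Ck_on (@EPdom R n) k (Fc K s).
Proof.
elim: k => [|k IH] K s /=; first exact: ccont_Fc.
split; first exact: ccont_Fc.
move=> v; exists (Fc (K * s * (complex.Im (v ord0 ord0))%:C) (s - 1)); split; last exact: IH.
by move=> p Hp; exact: has_Fc.
Qed.

Lemma smooth_Fc K s : smooth_on (@EPdom R n) (Fc K s).
Proof. by move=> k; exact: Ck_Fc. Qed.
End S5.
Section S6.
Variable R : realType.
Local Notation C := R[i].
Variable n : nat.
Local Notation P := (EPpt R n).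
Variable L : R.
Hypothesis L0 : L != 0.

Definition c0 : C := 0 +i* (- (2 * L)^-1).
Lemma Re_c0 : complex.Re c0 = 0. Proof. by []. Qed.
Lemma Im_c0 : complex.Im c0 = - (2 * L)^-1. Proof. by []. Qed.
Definition eta0 : form1 R n := fun p v => Fc (c0 * v ord0 ord0) (-1) p.

Lemma eta0E (p v : P) : 0 < complex.Im (p ord0 ord0) ->
  eta0 p v = c0 * v ord0 ord0 * (complex.Im (p ord0 ord0))^-1%:C.
Proof. by move=> h; rewrite /eta0 /Fc cpowN1. Qed.

Lemma deta0 (p X Y : P) : EPdom p ->
  dform eta0 p X Y = (L)%:C * wedge1 eta0 (conjform eta0) p X Y.
Proof.
rewrite /EPdom => Hp.
rewrite /dform (dirderiv_has (has_Fc (c0 * Y ord0 ord0) (-1) X Hp)).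
rewrite (dirderiv_has (has_Fc (c0 * X ord0 ord0) (-1) Y Hp)).
rewrite /wedge1 /conjform !eta0E // cpowB1 // cpowN1 //.
have y0 := lt0r_neq0 Hp.
move: (complex.Im (p ord0 ord0)) y0 => y y0.
move: (X ord0 ord0) (Y ord0 ord0) => [x1 x2] [y1 y2].
apply: ceqP; rewrite !(cReM, cImM, cReD, cImD, cReN, cImN, cReJ, cImJ, cReR, cImR, Re_c0, Im_c0, cReC, cImC, cRe1, cIm1); field.
all: by rewrite L0 y0.
Qed.
End S6.
Section S7.
Variable R : realType.
Local Notation C := R[i].
Variable n : nat.
Local Notation P := (EPpt R n).
Variable L : R.
Hypothesis L0 : L != 0.
Variable beta : 'I_n -> C.

Definition sk (k : 'I_n) : C := - Log (beta k) / L%:C.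
Definition theta0 (k : 'I_n) : form1 R n := fun p v => Fc (v ord0 (lift ord0 k)) (sk k) p.

Lemma realC_neq0 (x : R) : x != 0 -> x%:C != 0 :> C.
Proof. by move=> h; rewrite eq_complex /= negb_and h. Qed.

Lemma eta_re (p X : P) : 0 < complex.Im (p ord0 ord0) ->
  eta0 L p X + (eta0 L p X)^* = (complex.Im (X ord0 ord0) / (L * complex.Im (p ord0 ord0)))%:C.
Proof.
move=> Hp; rewrite addcJ (eta0E L X Hp).
have y0 := lt0r_neq0 Hp.
move: (complex.Im (p ord0 ord0)) y0 => y y0.
move: (X ord0 ord0) => [x1 x2].
apply: ceqP; rewrite !(cReM, cImM, cReD, cImD, cReN, cImN, cReJ, cImJ, cReR, cImR, Re_c0, Im_c0, cReC, cImC, cRe1, cIm1).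
field.
- by rewrite y0 L0.
- by rewrite !(mulr0, mul0r, addr0).
Qed.

Lemma dtheta0 (k : 'I_n) (p X Y : P) : EPdom p ->
  dform (theta0 k) p X Y = - Log (beta k) * wedge1 (addform (eta0 L) (conjform (eta0 L))) (theta0 k) p X Y.
Proof.
rewrite /EPdom => Hp.
rewrite /dform (dirderiv_has (has_Fc (Y ord0 (lift ord0 k)) (sk k) X Hp)).
rewrite (dirderiv_has (has_Fc (X ord0 (lift ord0 k)) (sk k) Y Hp)).
rewrite /wedge1 /addform /conjform /=.
rewrite (eta_re X Hp) (eta_re Y Hp).
rewrite /theta0 /Fc (cpowB1 (sk k) Hp).
have y0 := lt0r_neq0 Hp.
move: (cpow (complex.Im (p ord0 ord0)) (sk k)) => Pw.
move: (complex.Im (p ord0 ord0)) y0 => y y0.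
rewrite /sk !rmorphM /= !rmorphV ?unitfE //=.
field.
- by apply/andP; split; apply: realC_neq0.
- by rewrite mulf_neq0.
Qed.
End S7.
Section S8.
Variable R : realType.
Local Notation C := R[i].
Variable n : nat.
Local Notation P := (EPpt R n).
Variable L : R.
Hypothesis L0 : L != 0.
Variable beta : 'I_n -> C.

Definition dc (i : 'I_n.+1) (p : P) : C :=
  match unlift ord0 i with
  | None => c0 L * cpow (complex.Im (p ord0 ord0)) (-1)
  | Some k => cpow (complex.Im (p ord0 ord0)) (sk L beta k)
  end.

Lemma famfE i (p v : P) : famf (eta0 L) (theta0 L beta) i p v = v ord0 i * dc i p.
Proof.
rewrite /famf /dc; case: (unliftP ord0 i) => [k ->|->].
  by rewrite /theta0 /Fc.
by rewrite /eta0 /Fc; ring.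
Qed.

Lemma c0_neq0 : c0 L != 0.
Proof. rewrite eq_complex /= negb_and; apply/orP; right; rewrite oppr_eq0 invr_eq0 mulf_neq0 // pnatr_eq0. Qed.

Lemma dc_neq0 i p : dc i p != 0.
Proof.
rewrite /dc; case: (unlift ord0 i) => [k|]; first exact: cpow_neq0.
by rewrite mulf_neq0 ?c0_neq0 ?cpow_neq0.
Qed.

Lemma lin_sum (f : P -> C) :
  (forall (c : C) (v w : P), f (c *: v + w) = c * f v + f w) ->
  forall v, f v = \sum_i v ord0 i * f (delta_mx ord0 i).
Proof.
move=> Hf v.
have f0 : f 0 = 0.
  have := Hf 1 0 0; rewrite scaler0 addr0 mul1r => H.
  by apply: (@addrI _ (f 0)); rewrite addr0 -H.
rewrite {1}(row_sum_delta v).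
elim/big_rec2: _ => //= i y1 y2 _ H.
by rewrite Hf H.
Qed.

Lemma basis_EP (p : P) : basis10_at (famf (eta0 L) (theta0 L beta)) p.
Proof.
split.
  move=> c Hc i0.
  have := Hc (delta_mx ord0 i0).
  under eq_bigr do rewrite famfE.
  rewrite (bigD1 i0) //= big1 ?addr0; last first.
    by move=> i /negbTE Hi; rewrite mxE Hi /= mul0r mulr0.
  rewrite mxE !eqxx /= mul1r => /eqP; rewrite mulf_eq0 (negbTE (dc_neq0 _ _)) orbF.
  by move/eqP.
move=> f Hf; exists (fun i => f (delta_mx ord0 i) / dc i p) => v.
rewrite (lin_sum Hf v); apply: eq_bigr => i _.
rewrite famfE; field; exact: dc_neq0.
Qed.

Lemma eta0_lin (p : P) (c : C) (v w : P) :
  eta0 L p (c *: v + w) = c * eta0 L p v + eta0 L p w.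
Proof. by rewrite /eta0 /Fc !mxE; ring. Qed.

Lemma theta0_lin k (p : P) (c : C) (v w : P) :
  theta0 L beta k p (c *: v + w) = c * theta0 L beta k p v + theta0 L beta k p w.
Proof. by rewrite /theta0 /Fc !mxE; ring. Qed.
End S8.
Section S9.
Variable R : realType.
Local Notation C := R[i].
Variable n : nat.
Local Notation P := (EPpt R n).
Variable L : R.
Hypothesis L0 : L != 0.
Variable beta : 'I_n -> C.

Definition acoef (A : R) (B : 'I_n -> C) (j : 'I_n.+1) : C :=
  match unlift ord0 j with None => A%:C | Some k => B k end.
Definition bcoef (t : R) (s : 'I_n -> C) (j : 'I_n.+1) : C :=
  match unlift ord0 j with None => t%:C | Some k => s k end.
Definition aff A B t s : P -> P := fun p => \row_j (acoef A B j * p ord0 j + bcoef t s j).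

Definition Good (A : R) (B : 'I_n -> C) := 0 < A /\ forall k, B k * cpow A (sk L beta k) = 1.
Definition affclass (g : P -> P) :=
  exists A B t s, Good A B /\ forall p, g p = aff A B t s p.

Lemma aff0 A B t s (p : P) : aff A B t s p ord0 ord0 = A%:C * p ord0 ord0 + t%:C.
Proof. by rewrite /aff mxE /acoef /bcoef unlift_none. Qed.
Lemma affS A B t s (p : P) k : aff A B t s p ord0 (lift ord0 k) = B k * p ord0 (lift ord0 k) + s k.
Proof. by rewrite /aff mxE /acoef /bcoef liftK. Qed.

Lemma Dmap_aff A B t s (p v : P) : Dmap (aff A B t s) p v = \row_j (acoef A B j * v ord0 j).
Proof.
apply/rowP => j; rewrite !mxE.
apply: (dirderiv_aff (c0 := aff A B t s p ord0 j)) => t0.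
rewrite /aff !mxE; ring.
Qed.

Lemma Dmap0 A B t s (p v : P) : Dmap (aff A B t s) p v ord0 ord0 = A%:C * v ord0 ord0.
Proof. by rewrite Dmap_aff mxE /acoef unlift_none. Qed.
Lemma DmapS A B t s (p v : P) k : Dmap (aff A B t s) p v ord0 (lift ord0 k) = B k * v ord0 (lift ord0 k).
Proof. by rewrite Dmap_aff mxE /acoef liftK. Qed.

Lemma inv_aff g : affclass g ->
  invariant_form (@EPdom R n) g (eta0 L) /\ forall k, invariant_form (@EPdom R n) g (theta0 L beta k).
Proof.
case=> A [B [t [s [[A0 HB] Hg]]]].
have -> : g = aff A B t s by apply: funext.
have Im0 : forall p : P, complex.Im (aff A B t s p ord0 ord0) = A * complex.Im (p ord0 ord0).
  by move=> p; rewrite aff0 cImD cImM /= mul0r !addr0.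
split.
  move=> p Hp v; rewrite /eta0 /Fc Dmap0 Im0 (cpowN1 (mulr_gt0 A0 Hp)) (cpowN1 Hp).
  rewrite invfM rmorphM /=; field.
  by rewrite !realC_neq0 // ?lt0r_neq0.
move=> k p Hp v; rewrite /theta0 /Fc DmapS Im0 (cpowM _ A0 Hp).
have := HB k; move: (cpow A (sk L beta k)) => Q HQ.
rewrite -[RHS]mul1r -HQ; ring.
Qed.

Lemma affclass_comp g h : affclass g -> affclass h -> affclass (g \o h).
Proof.
case=> A1 [B1 [t1 [s1 [[A10 HB1] Hg]]]].
case=> A2 [B2 [t2 [s2 [[A20 HB2] Hh]]]].
exists (A1 * A2), (fun k => B1 k * B2 k), (A1 * t2 + t1), (fun k => B1 k * s2 k + s1 k).
split.
  split; first exact: mulr_gt0.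
  move=> k; rewrite (cpowM _ A10 A20).
  have := HB1 k; have := HB2 k.
  move: (cpow A1 (sk L beta k)) (cpow A2 (sk L beta k)) => Q1 Q2 H2 H1.
  by rewrite -[RHS]mulr1 -{1}H1 -H2; ring.
move=> p /=; rewrite Hg Hh; apply/rowP => j; rewrite /aff !mxE /acoef /bcoef.
case: (unliftP ord0 j) => [k ->|->] /=; rewrite ?rmorphD ?rmorphM /=; ring.
Qed.

Lemma Good_neq0 A B k : Good A B -> B k != 0.
Proof.
case=> _ HB; apply/negP => /eqP H; have := HB k; rewrite H mul0r => /eqP.
by rewrite eq_sym oner_eq0.
Qed.

Lemma affclass_inv g h : affclass g -> cancel g h -> cancel h g -> affclass h.
Proof.
case=> A [B [t [s [GB Hg]]]] gh hg.
have [A0 HB] := GB.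
have A0' : A != 0 by rewrite lt0r_neq0.
exists (A^-1), (fun k => (B k)^-1), (- (t / A)), (fun k => - (s k / B k)).
have Hphi : forall p, g (aff (A^-1) (fun k => (B k)^-1) (- (t / A)) (fun k => - (s k / B k)) p) = p.
  move=> p; rewrite Hg; apply/rowP => j; rewrite /aff !mxE /acoef /bcoef.
  case: (unliftP ord0 j) => [k ->|->] /=.
    have Bk := Good_neq0 k GB; field; exact: Bk.
  rewrite rmorphN rmorphM rmorphV ?unitfE //=; field; exact: realC_neq0.
split; last by move=> p; rewrite -{1}(Hphi p) gh.
split; first by rewrite invr_gt0.
move=> k.
have HQ : cpow (A^-1) (sk L beta k) * cpow A (sk L beta k) = 1.
  by rewrite -cpowM ?invr_gt0 // mulVf // cpow1.
have := HB k; have := cpow_neq0 A (sk L beta k).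
move: (cpow A (sk L beta k)) (cpow A^-1 (sk L beta k)) HQ => Q1 Q2 H2 Hn H1.
have Bk := Good_neq0 k GB.
have -> : B k = Q1^-1 by apply: (mulIf Hn); rewrite H1 mulVf.
have -> : Q2 = Q1^-1 by apply: (mulIf Hn); rewrite H2 mulVf.
by rewrite invrK mulfV.
Qed.
End S9.
Section S10.
Variable R : realType.
Local Notation C := R[i].

Lemma cexp_Log (z : C) : 0 < complex.Im z -> cexp (Log z) = z.
Proof.
move=> Hz.
set a := complex.Re z; set b := complex.Im z.
have cpos : 0 < cabs z.
  rewrite /cabs sqrtr_gt0 -/a -/b; apply: ltr_wpDl; first exact: sqr_ge0.
  by rewrite exprn_gt0.
have Hc2 : cabs z ^+ 2 = a ^+ 2 + b ^+ 2.
  by rewrite /cabs sqr_sqrtr // addr_ge0 ?sqr_ge0.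
set x := a / cabs z.
have Hx : `|x| <= 1.
  rewrite /x normrM normfV (gtr0_norm cpos) ler_pdivrMr // mul1r.
  by rewrite /cabs -/a -/b Re_le_sqrt.
have Hx' : x \in `[(-1), 1].
  by rewrite in_itv /= -ler_norml.
have Harg : Arg z = acos x by rewrite /Arg ltW.
rewrite /Log /cexp /= Harg lnK ?posrE // acosK // sin_acos; last by rewrite -ler_norml.
apply: ceqP => /=.
  by rewrite /x mulrC divfK ?lt0r_neq0.
have H1 : 1 - x ^+ 2 = (b / cabs z) ^+ 2.
  apply: (mulIf (@expf_neq0 _ (cabs z) 2 (lt0r_neq0 cpos))).
  by rewrite /x !expr_div_n mulrBl !divfK ?expf_neq0 ?lt0r_neq0 // mul1r Hc2; ring.
rewrite H1 sqrtr_sqr gtr0_norm ?divr_gt0 //.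
by rewrite mulrC divfK ?lt0r_neq0.
Qed.
End S10.
Section S11.
Variable R : realType.
Local Notation C := R[i].
Variable n : nat.
Local Notation P := (EPpt R n).
Variable alpha : R.
Hypothesis alpha_gt0 : 0 < alpha.
Hypothesis L0 : ln alpha != 0.
Variable beta : 'I_n -> C.
Hypothesis Im_beta : forall j, 0 < complex.Im (beta j).
Variable m : nat.
Variable Rm : 'M[C]_n.
Hypothesis HRm : forall l k, Rm l k = if l == k then beta k else 0.
Variable a : 'cV[R]_m.
Variable b : 'I_n -> 'cV[C]_m.

Lemma beta_neq0 k : beta k != 0.
Proof. by rewrite eq_complex negb_and /= (lt0r_neq0 (Im_beta k)) orbT. Qed.

Lemma gen_aff i : affclass (ln alpha) beta (EPgens alpha Rm a b i).
Proof.
rewrite /EPgens; case: (unliftP ord0 i) => [i' _|_] /=.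
  exists 1, (fun _ => 1), (a i' ord0), (fun k => b k i' ord0); split.
    by split => // k; rewrite cpow1 mul1r.
  move=> p; apply/rowP => j; rewrite /aff /uvec !mxE /acoef /bcoef.
  by case: (unliftP ord0 j) => [k ->|->] /=; rewrite mul1r.
exists alpha, beta, 0, (fun _ => 0); split.
  split => // k; rewrite /cpow /sk divfK; last by apply: realC_neq0.
  by rewrite cexpN cexp_Log // mulfV // beta_neq0.
move=> p; apply/rowP => j; rewrite /aff /EPg0 !mxE /acoef /bcoef.
case: (unliftP ord0 j) => [k ->|->] /=; last by rewrite addr0.
rewrite addr0 (bigD1 k) //= big1 ?addr0 ?HRm ?eqxx //.
by move=> l /negbTE Hl; rewrite HRm Hl mul0r.
Qed.

Lemma group_aff g : gen_group (EPgens alpha Rm a b) g -> affclass (ln alpha) beta g.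
Proof.
elim=> [i|g1 h1 _ IH1 _ IH2|g1 h1 _ IH1 gh hg].
- exact: gen_aff.
- exact: affclass_comp.
- exact: affclass_inv IH1 gh hg.
Qed.
End S11.
Unset Implicit Arguments.
Theorem corollary5p2 (R : realType) (n : nat) (n_ge2 : (2 <= n)%N)
  (M : 'M[int]_((2 * n).+1)) (detM : \det M = 1)
  (alpha : R) (alpha_gt0 : 0 < alpha) (alpha_ne1 : alpha != 1)
  (beta : 'I_n -> R[i]) (Im_beta : forall j, 0 < complex.Im (beta j))
  (charM : char_poly (map_mx (@intC R) M) =
      ('X - (alpha%:C)%:P) * (\prod_j ('X - (beta j)%:P))
      * (\prod_j ('X - ((beta j)^*)%:P)))
  (diagM : diagonalizable (map_mx (@intC R) M))
  (a : 'cV[R]_((2 * n).+1)) (a_nz : a != 0)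
  (a_eig : map_mx (fun z : int => z%:~R : R) M *m a = alpha *: a)
  (b : 'I_n -> 'cV[R[i]]_((2 * n).+1))
  (b_basis : basis_of_W (map_mx (@intC R) M) beta b)
  (b_eig : forall j, map_mx (@intC R) M *m b j = beta j *: b j)
  (Rm : 'M[R[i]]_n)
  (Rm_def : forall j, map_mx (@intC R) M *m b j = \sum_i Rm i j *: b i) :
  exists (eta : form1 R n) (theta : 'I_n -> form1 R n),
    smooth_10_form (@EPdom R n) eta /\
        (forall k, smooth_10_form (@EPdom R n) (theta k)) /\
        (forall g, gen_group (EPgens alpha Rm a b) g ->
           invariant_form (@EPdom R n) g eta /\
           forall k, invariant_form (@EPdom R n) g (theta k)) /\
        (forall p, EPdom p -> basis10_at (famf eta theta) p) /\
        (forall p X Y, EPdom p ->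
           dform eta p X Y = (ln alpha)%:C * wedge1 eta (conjform eta) p X Y) /\
        (forall k p X Y, EPdom p ->
           dform (theta k) p X Y
             = - Log (beta k) * wedge1 (addform eta (conjform eta)) (theta k) p X Y).
Proof.
have L0 : ln alpha != 0 by rewrite ln_eq0.
have HRm : forall l k, Rm l k = if l == k then beta k else 0.
  move=> l k.
  have [_ [Hind _]] := b_basis.
  pose c := fun l => Rm l k - (if l == k then beta k else 0).
  have Hc : \sum_j c j *: b j = 0.
    rewrite /c; under eq_bigr do rewrite scalerBl.
    rewrite sumrB -Rm_def b_eig (bigD1 k) //= eqxx big1 ?addr0 ?subrr //.
    by move=> j /negbTE ->; rewrite scale0r.
  by apply/eqP; rewrite -subr_eq0; apply/eqP; exact: (Hind c Hc l).
exists (eta0 (ln alpha)), (theta0 (ln alpha) beta).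
split.
  split; first by move=> p _ c v w; exact: eta0_lin.
  by move=> v; exact: smooth_Fc.
split.
  move=> k; split; first by move=> p _ c v w; exact: theta0_lin.
  by move=> v; exact: smooth_Fc.
split.
  move=> g Hg; exact: inv_aff (group_aff alpha_gt0 L0 Im_beta HRm Hg).
split; first by move=> p _; exact: basis_EP.
split; first by move=> p X Y Hp; exact: deta0.
by move=> k p X Y Hp; exact: dtheta0.
Qed.
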